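(* Let $A$ be a Noetherian commutative ring with identity, let $A[\mathbf{x}]=A[x_1,\ldots,x_n]$ be equipped with a monomial order, let $I\subset A[\mathbf{x}]$ be an ideal, let $q\subset A$ be an isolated primary component of $I\cap A$ (i.e. a primary component whose associated prime is a minimal prime of $I\cap A$), and let $p\subset A$ be its associated minimal prime. Define $B=A_p/q_p$. Then $$\mathrm{in}(I)\,B[\mathbf{x}]=\mathrm{in}(I\,B[\mathbf{x}]).$$
   Context: A monomial order $>$ is a total order on monomials such that $\mathbf{x}^E>\mathbf{x}^F$ implies $\mathbf{x}^G\mathbf{x}^E>\mathbf{x}^G\mathbf{x}^F$, and $x_i>1$ for each $i$; the same order is used over $B$. $\mathrm{in}(f)$ is the greatest term $c\,\mathbf{x}^E$ ($c\neq0$) of a nonzero polynomial $f$; $\mathrm{in}(I)$ is the ideal generated by all $\mathrm{in}(f)$, $f\in I$. $K\,B[\mathbf{x}]$ denotes the ideal of $B[\mathbf{x}]$ generated by the image of $K\subset A[\mathbf{x}]$ under the natural map $A\to B$ applied to coefficients. *)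

(* Defs.v *)
From HB Require Import structures.
From mathcomp Require Import all_boot all_order all_algebra.
From mathcomp Require Import finmap multinomials.mpoly.
Set Implicit Arguments. Unset Strict Implicit. Unset Printing Implicit Defensive.
Import GRing.Theory.
Local Open Scope ring_scope.

Definition subset_of (T : Type) (S S' : T -> Prop) := forall x, S x -> S' x.

Definition is_ideal (R : comNzRingType) (I : R -> Prop) :=
  [/\ I 0, (forall x y, I x -> I y -> I (x + y)) & (forall r x, I x -> I (r * x))].

Definition gen_ideal (R : comNzRingType) (S : R -> Prop) : R -> Prop :=
  fun x => exists l : seq (R * R),
      (forall pr, pr \in l -> S pr.2) /\ x = \sum_(pr <- l) pr.1 * pr.2.

Definition image_set (T U : Type) (f : T -> U) (S : T -> Prop) : U -> Prop :=
  fun y => exists x, S x /\ y = f x.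

Definition noetherian (R : comNzRingType) :=
  forall I : R -> Prop, is_ideal I ->
    exists l : seq R, forall x, I x <-> gen_ideal (fun y => y \in l) x.

Definition prime_ideal (R : comNzRingType) (P : R -> Prop) :=
  [/\ is_ideal P, ~ P 1 & forall a b, P (a * b) -> P a \/ P b].

Definition primary_ideal (R : comNzRingType) (Q : R -> Prop) :=
  [/\ is_ideal Q, ~ Q 1 &
      forall a b, Q (a * b) -> Q a \/ exists k : nat, Q (b ^+ k)].

Definition radical (R : comNzRingType) (Q : R -> Prop) : R -> Prop :=
  fun a => exists k : nat, Q (a ^+ k).

Definition minimal_prime_over (R : comNzRingType) (J P : R -> Prop) :=
  [/\ prime_ideal P, subset_of J P &
      forall P', prime_ideal P' -> subset_of J P' -> subset_of P' P -> subset_of P P'].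

Definition min_primary_decomposition (R : comNzRingType) (J : R -> Prop)
    (k : nat) (Qs : nat -> R -> Prop) :=
  [/\ forall i, (i < k)%N -> primary_ideal (Qs i),
      forall x, J x <-> (forall i, (i < k)%N -> Qs i x),
      forall i j, (i < k)%N -> (j < k)%N -> i <> j ->
        ~ (forall a, radical (Qs i) a <-> radical (Qs j) a) &
      forall i, (i < k)%N ->
        ~ (forall x, (forall j, (j < k)%N -> j <> i -> Qs j x) -> Qs i x)].

Definition isolated_primary_component (R : comNzRingType) (J q : R -> Prop) :=
  (exists (k : nat) (Qs : nat -> R -> Prop) (i : nat),
      [/\ min_primary_decomposition J k Qs, (i < k)%N &
          forall x, Qs i x <-> q x])
  /\ minimal_prime_over J (radical q).

Definition contraction (A : comNzRingType) (n : nat) (I : {mpoly A[n]} -> Prop)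
  : A -> Prop := fun a => I a%:MP.

Definition monomial_order (n : nat) (lt : rel 'X_{1..n}) :=
  [/\ irreflexive lt, transitive lt,
      (forall m1 m2, m1 != m2 -> lt m1 m2 || lt m2 m1),
      (forall g e f, lt e f -> lt (g + e)%MM (g + f)%MM) &
      (forall i : 'I_n, lt 0%MM U_(i)%MM)].

Definition is_lead_mon (R : nzRingType) (n : nat) (lt : rel 'X_{1..n})
    (f : {mpoly R[n]}) (m : 'X_{1..n}) :=
  m \in msupp f /\ forall m', m' \in msupp f -> m' != m -> lt m' m.

Definition init_terms (R : nzRingType) (n : nat) (lt : rel 'X_{1..n})
    (S : {mpoly R[n]} -> Prop) : {mpoly R[n]} -> Prop :=
  fun t => exists f m, [/\ S f, f != 0, is_lead_mon lt f m & t = f@_m *: 'X_[m]].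

Definition init_ideal (R : comNzRingType) (n : nat) (lt : rel 'X_{1..n})
    (I : {mpoly R[n]} -> Prop) : {mpoly R[n]} -> Prop :=
  gen_ideal (init_terms lt I).

Definition extend_ideal (A B : comNzRingType) (n : nat) (phi : A -> B)
    (K : {mpoly A[n]} -> Prop) : {mpoly B[n]} -> Prop :=
  gen_ideal (image_set (map_mpoly phi) K).

(* phi : A -> B exhibits B as A_p / q_p, i.e. as the localization of A/q at the
   image of the multiplicative set A \ p (standard characterization). *)
Definition is_loc_quot (A B : comNzRingType) (phi : A -> B) (p q : A -> Prop) :=
  [/\ forall s, ~ p s -> exists b, phi s * b = 1,
      forall b, exists a s, ~ p s /\ b * phi s = phi a &
      forall a, phi a = 0 <-> exists s, ~ p s /\ q (s * a)].

(* Main.v *)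
Require Import Defs.
From HB Require Import structures.
From mathcomp Require Import all_boot all_order all_algebra.
From mathcomp Require Import finmap multinomials.mpoly.
From Stdlib Require Import Classical.
From mathcomp Require Import ring.
Set Implicit Arguments. Unset Strict Implicit. Unset Printing Implicit Defensive.
Import GRing.Theory.
Local Open Scope ring_scope.

Section Gen.
Variable R : comNzRingType.

Lemma ideal_sum (J : R -> Prop) (l : seq (R * R)) :
  is_ideal J -> (forall pr, pr \in l -> J pr.2) -> J (\sum_(pr <- l) pr.1 * pr.2).
Proof.
case=> J0 JD JM; elim: l => [|pr l IH] H; first by rewrite big_nil.
rewrite big_cons; apply: JD; first by apply: JM; apply: H; rewrite inE eqxx.
by apply: IH => x hx; apply: H; rewrite inE hx orbT.
Qed.

Lemma gen_ideal_ideal (S : R -> Prop) : is_ideal (gen_ideal S).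
Proof.
split.
- by exists [::]; rewrite big_nil.
- move=> x y [l1 [H1 ->]] [l2 [H2 ->]]; exists (l1 ++ l2); rewrite big_cat; split=> //.
  by move=> pr; rewrite mem_cat => /orP[]; [apply: H1|apply: H2].
- move=> r x [l [H ->]]; exists [seq (r * pr.1, pr.2) | pr <- l]; split.
    by move=> pr /mapP[pr' hpr' ->] /=; apply: H.
  by rewrite big_map mulr_sumr; apply: eq_bigr => pr _ /=; rewrite mulrA.
Qed.

Lemma gen_ideal_sub (S : R -> Prop) x : S x -> gen_ideal S x.
Proof.
move=> Sx; exists [:: (1, x)]; split; first by move=> pr; rewrite inE => /eqP ->.
by rewrite big_cons big_nil mul1r addr0.
Qed.

Lemma gen_ideal_min (S J : R -> Prop) : is_ideal J -> (forall x, S x -> J x) ->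
  forall x, gen_ideal S x -> J x.
Proof. by move=> hJ hSJ x [l [H ->]]; apply: ideal_sum => // pr /H; apply: hSJ. Qed.

Lemma ideal_sumf (J : R -> Prop) (I : eqType) (r : seq I) (F : I -> R) :
  is_ideal J -> (forall i, i \in r -> J (F i)) -> J (\sum_(i <- r) F i).
Proof.
case=> J0 JD JM; elim: r => [|i r IH] H; first by rewrite big_nil.
rewrite big_cons; apply: JD; first by apply: H; rewrite inE eqxx.
by apply: IH => x hx; apply: H; rewrite inE hx orbT.
Qed.

End Gen.

Section Prime.
Variable R : comNzRingType.

Lemma ideal_mulr (J : R -> Prop) x r : is_ideal J -> J x -> J (x * r).
Proof. by case=> _ _ JM Jx; rewrite mulrC; apply: JM. Qed.

Lemma ideal_muln (J : R -> Prop) x k : is_ideal J -> J x -> J (x *+ k).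
Proof. by case=> _ _ JM Jx; rewrite -mulr_natl; apply: JM. Qed.

Lemma prime_pow (P : R -> Prop) a k : prime_ideal P -> P (a ^+ k) -> P a.
Proof.
case=> _ P1 PM; elim: k => [|k IH]; first by rewrite expr0.
by rewrite exprS => /PM [].
Qed.

Lemma prime_mul (P : R -> Prop) a b : prime_ideal P -> ~ P a -> ~ P b -> ~ P (a * b).
Proof. by case=> _ _ PM Pa Pb /PM []. Qed.

Lemma radical_sub (Q : R -> Prop) x : is_ideal Q -> Q x -> radical Q x.
Proof. by move=> _ Qx; exists 1%N; rewrite expr1. Qed.

Lemma primary_rad_prime (Q : R -> Prop) : primary_ideal Q -> prime_ideal (radical Q).
Proof.
case=> hQ Q1 QM; have [Q0 QD QMl] := hQ.
split; first split.
- by exists 1%N; rewrite expr1.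
- move=> x y [m Hm] [l Hl]; exists (m + l)%N; rewrite exprDn.
  elim/big_ind: _ => //.
  move=> [i /=]; rewrite ltnS => hi _; apply: ideal_muln => //.
  case: (leqP l i) => hli.
    by rewrite -(subnK hli) exprD mulrA; apply: QMl.
  have hm : (m <= m + l - i)%N by rewrite -addnBA ?leq_addr // ltnW.
  rewrite -(subnK hm) exprD; apply: ideal_mulr => //; exact: QMl.
- by move=> r x [m Hm]; exists m; rewrite exprMn; apply: QMl.
- by move=> [k]; rewrite expr1n.
- move=> a b [m]; rewrite exprMn => /QM [] H; first by left; exists m.
  by right; case: H => k Hk; exists (m * k)%N; rewrite exprM.
Qed.

Lemma prime_ideal_ext (P P' : R -> Prop) : (forall a, P a <-> P' a) ->
  prime_ideal P -> prime_ideal P'.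
Proof.
move=> E [[P0 PD PM] P1 Pp]; split; first split.
- by apply/E.
- by move=> x y /E hx /E hy; apply/E; apply: PD.
- by move=> r x /E hx; apply/E; apply: PM.
- by move/E.
- by move=> a b /E /Pp [] h; [left|right]; apply/E.
Qed.

Lemma isolated_sat (J q p : R -> Prop) :
  isolated_primary_component J q -> (forall a, p a <-> radical q a) ->
  forall x, q x -> exists t, ~ p t /\ J (t * x).
Proof.
move=> [[k [Qs [i [[Hprim HJ Hdist _] hik HQi]]]] [hrp hJrq hmin]] hp x qx.
have pp : prime_ideal p by apply: prime_ideal_ext hrp => a; split => /hp.
have ex : forall j, (j < k)%N -> j <> i -> exists t, ~ p t /\ Qs j t.
  move=> j hj hji; apply: NNPP => hn.
  have hsub : forall t, Qs j t -> p t.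
    by move=> t Qt; apply: NNPP => pt; apply: hn; exists t.
  have hpj := primary_rad_prime (Hprim j hj).
  have [hQj _ _] := Hprim j hj.
  have JP : subset_of J (radical (Qs j)).
    by move=> y /HJ Jy; apply: radical_sub => //; apply: Jy.
  have PP : subset_of (radical (Qs j)) (radical q).
    by move=> y [m Hm]; apply/hp; apply: prime_pow pp (hsub _ Hm).
  have := hmin _ hpj JP PP => PP'.
  apply: (Hdist j i hj hik hji) => a; split.
    move=> /PP [m Hm]; exists m; exact/HQi.
  by move=> [m Hm]; apply: PP'; exists m; apply/HQi.
have : forall N, exists t, ~ p t /\ forall j, (j < k)%N -> (j < N)%N -> j <> i -> Qs j t.
  elim=> [|N [t [pt Ht]]]; first by exists 1; split=> // h; case: pp => _ /(_ h).
  case: (ltnP N k) => hNk; last first.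
    exists t; split=> // j hj hjN; exact: (Ht j hj (leq_trans hj hNk)).
  case: (eqVneq N i) => [eNi|hNi].
    exists t; split=> // j hj; rewrite ltnS leq_eqVlt => /orP [/eqP -> //|].
    by move=> h1 h2; exact: Ht.
  have [s [ps Qs_s]] := ex N hNk (elimN eqP hNi).
  exists (t * s); split; first exact: prime_mul.
  move=> j hj; rewrite ltnS leq_eqVlt => /orP [/eqP -> _|hjN hji].
    by have [[_ _ QM] _ _] := Hprim N hNk; apply: QM.
  by have [hQj _ _] := Hprim j hj; apply: ideal_mulr => //; apply: Ht.
move=> /(_ k) [t [pt Ht]]; exists t; split => //; apply/HJ => j hj.
case: (eqVneq j i) => [->|hji].
  by have [[_ _ QM] _ _] := Hprim i hik; apply: QM; apply/HQi.
have [[_ _ QM] _ _] := Hprim j hj.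
by rewrite mulrC; apply: QM; apply: Ht => //; exact/eqP.
Qed.

End Prime.
Section Poly.
Variables (A B : comNzRingType) (phi : {rmorphism A -> B}) (p q : A -> Prop) (n : nat).
Hypothesis pp : prime_ideal p.
Hypothesis hB : is_loc_quot phi p q.

Lemma np1 : ~ p 1. Proof. by case: pp. Qed.
Lemma npM a b : ~ p a -> ~ p b -> ~ p (a * b).
Proof. by case: pp => _ _ PM Pa Pb /PM []. Qed.

Lemma frac_poly (h : {mpoly B[n]}) :
  exists c s, ~ p s /\ map_mpoly phi c = phi s *: h.
Proof.
rewrite (mpolyE h); elim: (msupp h) => [|m r [c [s [ps hc]]]].
  by exists 0, 1; split; [exact: np1|rewrite big_nil raddf0 scaler0].
have [_ Hb _] := hB; have [a [s2 [ps2 ha]]] := Hb h@_m.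
exists ((s * a) *: 'X_[m] + s2 *: c), (s * s2); split; first exact: npM.
rewrite big_cons raddfD /= !map_mpolyZ map_mpolyX hc scalerDr !scalerA.
rewrite !rmorphM -ha; congr (_ *: _ + _ *: _); ring.
Qed.


Lemma idealZ (I : {mpoly A[n]} -> Prop) s f : is_ideal I -> I f -> I (s *: f).
Proof. by case=> _ _ JM If; rewrite -mul_mpolyC; apply: JM. Qed.

Lemma frac_ext (I : {mpoly A[n]} -> Prop) : is_ideal I -> forall g,
  extend_ideal phi I g ->
  exists f s, [/\ I f, ~ p s & map_mpoly phi f = phi s *: g].
Proof.
move=> hI; have [I0 ID IM] := hI; apply: gen_ideal_min; last first.
  move=> y [f [If ->]]; exists f, 1; split=> //; first exact: np1.
  by rewrite rmorph1 scale1r.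
split.
- by exists 0, 1; split=> //; [exact: np1|rewrite raddf0 scaler0].
- move=> x y [f1 [s1 [I1 p1 h1]]] [f2 [s2 [I2 p2 h2]]].
  exists (s2 *: f1 + s1 *: f2), (s1 * s2); split.
  + by apply: ID; apply: idealZ.
  + exact: npM.
  + rewrite raddfD /= !map_mpolyZ h1 h2 !scalerA scalerDr rmorphM mulrC.
    by rewrite [phi s1 * _]mulrC.
- move=> r x [f [s [If ps hf]]]; have [c [s' [ps' hc]]] := frac_poly r.
  exists (c * f), (s' * s); split; first exact: IM.
  + exact: npM.
  + have -> : map_mpoly phi (c * f) = map_mpoly phi c * map_mpoly phi f by apply: rmorphM.
    by rewrite hc hf -scalerAr -!scalerAl scalerA rmorphM mulrC.
Qed.


Lemma kill (I : {mpoly A[n]} -> Prop) : is_ideal I ->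
  (forall a, phi a = 0 -> exists t, ~ p t /\ I (t * a)%:MP) ->
  forall g f s, I f -> ~ p s -> map_mpoly phi f = phi s *: g ->
  forall r : seq 'X_{1..n}, exists f' s', [/\ I f', ~ p s',
    map_mpoly phi f' = phi s' *: g &
    forall G, f'@_G != 0 -> g@_G = 0 -> G \in msupp f /\ G \notin r].
Proof.
move=> hI hsat g f s If ps hf; have [I0 ID IM] := hI.
elim=> [|F r [f' [s' [If' ps' hf' HG]]]].
  by exists f, s; split=> // G hG _; rewrite mcoeff_msupp.
case: (eqVneq g@_F 0) => hgF; last first.
  exists f', s'; split=> // G hG hgG; have [h1 h2] := HG G hG hgG.
  split=> //; rewrite inE negb_or h2 andbT; apply/eqP => eGF.
  by move: hgF; rewrite -eGF hgG eqxx.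
have hc : phi f'@_F = 0.
  by rewrite -mcoeff_map_mpoly hf' mcoeffZ hgF mulr0.
have [t [pt It]] := hsat _ hc.
exists (t *: f' - (t * f'@_F) *: 'X_[F]), (t * s'); split.
- apply: ID; first exact: idealZ.
  rewrite -mulN1r; apply: (IM); rewrite -mul_mpolyC mulrC; exact: IM.
- exact: npM.
- rewrite raddfB /= !map_mpolyZ map_mpolyX hf'.
  have -> : phi (t * f'@_F) = 0 by rewrite rmorphM hc mulr0.
  rewrite scale0r subr0.
  by rewrite scalerA rmorphM.
- move=> G; rewrite mcoeffB !mcoeffZ mcoeffX.
  case: (eqVneq F G) => [<-|hFG]; first by rewrite mulr1 subrr eqxx.
  rewrite mulr0 subr0 => hG hgG.
  have hG' : f'@_G != 0 by apply: contraNneq hG => ->; rewrite mulr0.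
  have [h1 h2] := HG G hG' hgG; split=> //.
  by rewrite inE negb_or h2 andbT eq_sym.
Qed.


Lemma dir2 (lt : rel 'X_{1..n}) (I : {mpoly A[n]} -> Prop) : is_ideal I ->
  (forall a, phi a = 0 -> exists t, ~ p t /\ I (t * a)%:MP) ->
  forall t, init_terms lt (extend_ideal phi I) t ->
    extend_ideal phi (init_ideal lt I) t.
Proof.
move=> hI hsat _ [g [E [Eg g0 [EgE Elead] ->]]].
have [f [s [If ps hf]]] := frac_ext hI Eg.
have [f' [s' [If' ps' hf' HG]]] := kill hI hsat If ps hf (msupp f).
have HG' : forall G, f'@_G != 0 -> g@_G != 0.
  move=> G hG; apply/eqP => hg; have [h1 h2] := HG G hG hg.
  by rewrite h1 in h2.
have [Hu _ _] := hB; have [b hb] := Hu s' ps'.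
have hE : phi f'@_E = phi s' * g@_E by rewrite -mcoeff_map_mpoly hf' mcoeffZ.
have f'E : f'@_E != 0.
  apply/eqP => h; move: EgE; rewrite mcoeff_msupp; apply/negP; rewrite negbK.
  move: hE; rewrite h raddf0 => /(congr1 (fun x => b * x)).
  by rewrite mulr0 mulrA [b * _]mulrC hb mul1r => <-.
have f'0 : f' != 0 by apply: contraNneq f'E => ->; rewrite mcoeff0.
have hin : init_terms lt I (f'@_E *: 'X_[E]).
  exists f', E; split=> //; split; first by rewrite mcoeff_msupp.
  move=> m' hm' hne; apply: Elead => //; rewrite mcoeff_msupp; apply: HG'.
  by rewrite -mcoeff_msupp.
exists [:: (b%:MP, map_mpoly phi (f'@_E *: 'X_[E]))]; split.
  move=> pr; rewrite inE => /eqP -> /=; exists (f'@_E *: 'X_[E]); split=> //.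
  exact: gen_ideal_sub.
rewrite big_cons big_nil addr0 /= map_mpolyZ map_mpolyX hE mul_mpolyC scalerA.
by rewrite mulrA [b * _]mulrC hb mul1r.
Qed.

Lemma dir1 (lt : rel 'X_{1..n}) (I : {mpoly A[n]} -> Prop) :
  forall t, init_terms lt I t ->
    init_ideal lt (extend_ideal phi I) (map_mpoly phi t).
Proof.
move=> _ [f [m [If f0 [fm flead] ->]]].
rewrite map_mpolyZ map_mpolyX.
case: (eqVneq (phi f@_m) 0) => [->|hnz].
  by rewrite scale0r; case: (gen_ideal_ideal (init_terms lt (extend_ideal phi I))).
apply: gen_ideal_sub; exists (map_mpoly phi f), m; split.
- by apply: gen_ideal_sub; exists f.
- by apply: contraNneq hnz => h; rewrite -mcoeff_map_mpoly h mcoeff0.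
- split; first by rewrite mcoeff_msupp mcoeff_map_mpoly.
  move=> m' hm' hne; apply: flead => //; move: hm'.
  rewrite !mcoeff_msupp mcoeff_map_mpoly; apply: contraNneq => ->.
  by rewrite raddf0.
- by rewrite mcoeff_map_mpoly.
Qed.

End Poly.

Unset Implicit Arguments.

Theorem proposition3p10 (A : comNzRingType) (n : nat) (lt : rel 'X_{1..n})
    (hlt : monomial_order lt) (hA : noetherian A)
    (I : {mpoly A[n]} -> Prop) (hI : is_ideal I)
    (q : A -> Prop) (hq : isolated_primary_component (contraction I) q)
    (p : A -> Prop) (hp : forall a, p a <-> radical q a)
    (B : comNzRingType) (phi : {rmorphism A -> B}) (hB : is_loc_quot phi p q) :
  forall g : {mpoly B[n]},
    extend_ideal phi (init_ideal lt I) g <-> init_ideal lt (extend_ideal phi I) g.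
Proof.
have pp : prime_ideal p.
  by case: hq => _ [hrp _ _]; apply: prime_ideal_ext hrp => a; split => /hp.
have hsat : forall a, phi a = 0 -> exists t, ~ p t /\ I (t * a)%:MP.
  move=> a ha; have [_ _ H3] := hB; have [s [ps qs]] := proj1 (H3 a) ha.
  have [t [pt Jt]] := isolated_sat hq hp qs.
  by exists (t * s); split; [exact: npM|rewrite -mulrA].
move=> g; split.
- apply: gen_ideal_min; first exact: gen_ideal_ideal.
  move=> _ [t [It ->]]; move: t It.
  apply: (@gen_ideal_min _ _ (fun t => init_ideal lt (extend_ideal phi I) (map_mpoly phi t))).
    have [J0 JD JM] := gen_ideal_ideal (init_terms lt (extend_ideal phi I)).
    split.
    + by rewrite raddf0.
    + by move=> x y hx hy; rewrite raddfD; apply: JD.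
    + move=> r x hx.
      have -> : map_mpoly phi (r * x) = map_mpoly phi r * map_mpoly phi x by apply: rmorphM.
      exact: JM.
  exact: dir1.
- apply: gen_ideal_min; first exact: gen_ideal_ideal.
  exact: (@dir2 _ _ phi p q n pp hB lt I hI hsat).
Qed.
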